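(* Let $P_n$ be the path on $n\ge 3$ vertices $1,\dots,n$ with edges $e_i=\{i,i+1\}$ ($1\le i\le n-1$), let $f_j=\{j,j+2\}$ ($1\le j\le n-2$), let $B=\{e_1,f_1,e_2,f_2,\dots,e_{n-2},f_{n-2},e_{n-1}\}$ (a basis of the row space of $\mathfrak{D}_2(P_n)$), and let $\mathfrak{D}_{P_n}=\mathfrak{D}_2(P_n)[B,B]$. For $\alpha\in B$, let $\mathfrak{D}_{P_n}(\alpha|\alpha)$ be the matrix obtained from $\mathfrak{D}_{P_n}$ by deleting the row and column indexed by $\alpha$. Then $\det\mathfrak{D}_{P_n}(\alpha|\alpha)=-(n-1)$ if $\alpha$ is a pendant edge of $P_n$ (i.e. $\alpha\in\{e_1,e_{n-1}\}$), and $\det\mathfrak{D}_{P_n}(\alpha|\alpha)=-(2n-3)$ otherwise.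
   Context: For a tree $T$, let $\mathcal{V}_2$ be the set of 2-element vertex subsets (edges regarded as elements of $\mathcal{V}_2$). The 2-Steiner distance matrix $\mathfrak{D}_2(T)$ is indexed by $\mathcal{V}_2$, with entry in row $\{i,j\}$, column $\{k,l\}$ equal to the minimum number of edges of a connected subtree of $T$ whose vertex set contains $i,j,k,l$. $M[B,B]$ denotes the principal submatrix with rows and columns indexed by $B$. *)

(* Defs.v *)
From mathcomp Require Import all_boot all_order all_algebra.
Set Implicit Arguments. Unset Strict Implicit. Unset Printing Implicit Defensive.
Import GRing.Theory Num.Theory.
Local Open Scope ring_scope.

Definition induced_connected (T : finType) (e : rel T) (W : {set T}) : bool :=
  [forall x in W, forall y in W,
     connect [rel a b | [&& e a b, a \in W & b \in W]] x y].

(* Steiner distance of S in a tree (T,e): the minimum number of edges of a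
   connected subtree whose vertex set contains S.  A connected subtree of a
   tree with vertex set W is the induced subgraph on W and has #|W| - 1 edges. *)
Definition steiner_dist (T : finType) (e : rel T) (S : {set T}) : nat :=
  \big[minn/#|T|]_(W : {set T} | (S \subset W) && induced_connected e W) (#|W|).-1.

(* The path P_n on vertices 0, ..., n-1 (paper's 1..n shifted by one). *)
Definition path_rel (n : nat) : rel 'I_n :=
  fun x y : 'I_n => (x.+1 == y :> nat) || (y.+1 == x :> nat).

(* The basis B, indexed by k : 'I_(2n-3) in the order
   e_1, f_1, e_2, f_2, ..., e_{n-2}, f_{n-2}, e_{n-1}:
   k = 2m   gives e_{m+1} = {m, m+1}   (0-based vertices),
   k = 2m+1 gives f_{m+1} = {m, m+2}. *)
Definition B_elt (n : nat) (k : 'I_(2 * n - 3)%N) : {set 'I_n} :=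
  [set x : 'I_n | (x == k./2 :> nat) || (x == k./2 + 1 + odd k :> nat)]%N.

Definition D_Pn (n : nat) : 'M[int]_(2 * n - 3)%N :=
  \matrix_(a, b) (steiner_dist (@path_rel n) (B_elt a :|: B_elt b))%:Z.

Definition degree (T : finType) (e : rel T) (x : T) : nat := #|[set y | e x y]|.

Definition pendant_edge (T : finType) (e : rel T) (alpha : {set T}) : bool :=
  [exists x, exists y, [&& alpha == [set x; y], e x y &
                           (degree e x == 1)%N || (degree e y == 1)%N]].

(* Main.v *)
Require Import Defs.
From mathcomp Require Import all_boot all_order all_algebra zify ring.

Lemma bigmin_le_nat (T : finType) (P : pred T) (F : T -> nat) x (j : T) :
  P j -> (\big[minn/x]_(i | P i) F i <= F j)%N.
Proof.
move=> Pj; have : j \in index_enum T by rewrite mem_index_enum.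
elim: (index_enum T) => [//|h r IH]; rewrite inE big_cons => /orP [/eqP <-|jr].
  by rewrite Pj geq_minl.
case: ifP => _; last exact: IH.
by rewrite geq_min IH ?orbT.
Qed.

Section Comb.
Variable n : nat.
Notation PR W := [rel a b : 'I_n | [&& path_rel a b, a \in W & b \in W]].

Lemma PR_sym (W : {set 'I_n}) : symmetric (PR W).
Proof. by move=> a b /=; rewrite /path_rel; case: (a \in W); case: (b \in W); rewrite /= ?andbF // orbC. Qed.

Lemma conn_between (W : {set 'I_n}) (x y : 'I_n) : x \in W -> connect (PR W) x y ->
  forall z : 'I_n, (x <= z <= y)%N -> z \in W.
Proof.
move=> xW /connectP [p pth ->] z.
elim: p x xW pth => [|h p IH] x xW /=.
  move=> _ /= hz; have -> : z = x by apply: val_inj => /=; lia.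
  exact: xW.
move=> /andP [/and3P [hxh _ hW] pth] hz.
have [->|ne] := eqVneq z x; first exact: xW.
apply: (IH h hW pth).
have : (x != z :> nat) by apply: contra ne => /eqP e; apply/eqP/val_inj.
case/andP: hz => hxz ->; rewrite andbT; move: hxh; rewrite /path_rel => /orP [] /eqP e hn; lia.
Qed.

Lemma interval_conn (x0 y0 : 'I_n) :
  induced_connected (@path_rel n) [set z : 'I_n | (x0 <= z <= y0)%N].
Proof.
set W := [set z : 'I_n | (x0 <= z <= y0)%N].
have main : forall t x (y : 'I_n), x \in W -> y \in W -> (y = x + t :> nat) -> connect (PR W) x y.
  elim=> [|t IH] x y xW yW e.
    have -> : y = x by apply: val_inj => /=; rewrite e addn0.
    exact: connect0.
  have y1n : (y.-1 < n)%N by have := ltn_ord y; lia.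
  pose y' : 'I_n := Ordinal y1n.
  have y'W : y' \in W by move: xW yW; rewrite !inE /=; lia.
  apply: connect_trans (IH x y' xW y'W _) _; first by rewrite /= e; lia.
  apply: connect1; rewrite /= y'W yW /path_rel /= andbT; apply/orP; left; apply/eqP; lia.
apply/forallP => x; apply/implyP => xW; apply/forallP => y; apply/implyP => yW.
have [xy|yx] := leqP x y.
  by apply: (main (y - x) x y xW yW); lia.
rewrite (sym_connect_sym (PR_sym W)).
by apply: (main (x - y) y x yW xW); lia.
Qed.

Lemma card_interval (x y : nat) : (x <= y < n)%N -> #|[set z : 'I_n | (x <= z <= y)%N]| = (y - x).+1.
Proof.
move=> /andP [xy yn].
rewrite -sum1_card.
rewrite (eq_bigr (fun z : 'I_n => 1)) //.
rewrite big_mkcond /=.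
under eq_bigr => z _ do rewrite inE.
rewrite -(big_mkord xpredT (fun z => if x <= z <= y then 1 else 0)).
rewrite (@big_cat_nat _ _ _ x) /=; [|lia|lia].
rewrite (@big_cat_nat _ _ _ y.+1 x) /=; [|lia|lia].
rewrite big1_seq; last by move=> i /andP [_]; rewrite mem_index_iota => h; case: ifP => //; lia.
rewrite [X in _ + (_ + X)]big1_seq; last by move=> i /andP [_]; rewrite mem_index_iota => h; case: ifP => //; lia.
rewrite big_seq (eq_bigr (fun _ => 1)); last by move=> i; rewrite mem_index_iota => h; case: ifP => //; lia.
rewrite -big_seq sum_nat_const_nat. lia.
Qed.

Lemma steiner_path (S : {set 'I_n}) (x0 y0 : 'I_n) :
  x0 \in S -> y0 \in S -> (forall z, z \in S -> (x0 <= z <= y0)%N) ->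
  steiner_dist (@path_rel n) S = (y0 - x0)%N.
Proof.
move=> xS yS hS.
have xy : (x0 <= y0)%N by have /andP [] := hS _ yS.
set I := [set z : 'I_n | (x0 <= z <= y0)%N].
have cI : #|I| = (y0 - x0).+1 by apply: card_interval; rewrite xy ltn_ord.
apply/eqP; rewrite eqn_leq; apply/andP; split.
  rewrite /steiner_dist; apply: leq_trans (@bigmin_le_nat _ _ _ _ I _) _.
    rewrite interval_conn andbT; apply/subsetP => z zS; rewrite inE; exact: hS.
  by rewrite cI.
rewrite /steiner_dist; apply: (big_ind (fun m => y0 - x0 <= m)%N).
- by rewrite card_ord; have := ltn_ord y0; lia.
- by move=> a b ha hb; rewrite leq_min ha hb.
move=> W /andP [sSW cW].
have xW : x0 \in W by apply: (subsetP sSW).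
have yW : y0 \in W by apply: (subsetP sSW).
have cxy : connect (PR W) x0 y0.
  by move/forallP: cW => /(_ x0); rewrite xW /= => /forallP /(_ y0); rewrite yW.
have sIW : I \subset W.
  apply/subsetP => z; rewrite inE => hz; exact: (@conn_between W x0 y0 xW cxy z hz).
have := subset_leq_card sIW; rewrite cI; lia.
Qed.
End Comb.

Import GRing.Theory Num.Theory.
Local Open Scope ring_scope.
Set Implicit Arguments. Unset Strict Implicit. Unset Printing Implicit Defensive.
Section Gen.
Variable F : fieldType.

Lemma det_rowdiff k (A : 'M[F]_k.+1) :
  \det (\matrix_(i, j) (A i j - (if (i < k)%N then A (inord i.+1) j else 0))) = \det A.
Proof.
pose N : 'M[F]_k.+1 := \matrix_(i, j) (((i < k)%N && (j == i.+1 :> nat))%:R).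
have -> : \matrix_(i, j) (A i j - (if (i < k)%N then A (inord i.+1) j else 0))
   = (1%:M - N) *m A.
  rewrite mulmxBl mul1mx; apply/matrixP => i j; rewrite !mxE; congr (_ - _).
  case: ifP => ik.
    rewrite (bigD1 (inord i.+1)) //= mxE ik inordK ?ltnS // eqxx mul1r big1 ?addr0 //.
    move=> m /negbTE hm; rewrite mxE ik.
    have -> : (m == i.+1 :> nat) = false.
      apply/negbTE; apply: contraFN hm => /eqP hm; apply/eqP/val_inj.
      by rewrite /= inordK ?ltnS.
    by rewrite mul0r.
  by rewrite big1 // => m _; rewrite mxE ik mul0r.
rewrite det_mulmx -det_tr det_trig.
  rewrite big1 ?mul1r // => i _; rewrite !mxE eqxx.
  have -> : (i == i.+1 :> nat) = false by lia.
  by rewrite andbF subr0.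
apply/is_trig_mxP => i j ij; rewrite !mxE.
have -> : (j == i) = false by apply/negbTE; rewrite neq_ltn ij orbT.
have -> : (i == j.+1 :> nat) = false by lia.
by rewrite andbF subr0.
Qed.

Lemma det_lastrow k (A : 'M[F]_k.+1) (g : 'I_k.+1 -> F) :
  \det (\matrix_(i, j) (A i j + (if i == ord_max then
      \sum_(m < k.+1 | m != ord_max) g m * A m j else 0))) = \det A.
Proof.
pose G : 'M[F]_k.+1 := \matrix_(i, m) (if (i == ord_max) && (m != ord_max) then g m else 0).
have -> : \matrix_(i, j) (A i j + (if i == ord_max then
      \sum_(m < k.+1 | m != ord_max) g m * A m j else 0)) = (1%:M + G) *m A.
  rewrite mulmxDl mul1mx; apply/matrixP => i j; rewrite !mxE; congr (_ + _).
  case: ifP => ik.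
    rewrite [LHS]big_mkcond; apply: eq_bigr => m _; rewrite mxE ik /=.
    by case: ifP => _; rewrite ?mul0r.
  by rewrite big1 // => m _; rewrite mxE ik mul0r.
rewrite det_mulmx det_trig.
  rewrite big1 ?mul1r // => i _; rewrite !mxE eqxx.
  by rewrite andbN addr0.
apply/is_trig_mxP => i j ij; rewrite !mxE.
have -> : (i == j) = false by apply/negbTE; rewrite neq_ltn ij.
have -> : (i == ord_max) = false.
  by apply/negbTE; apply/eqP => hi; move: ij; rewrite hi /= ltnNge -ltnS ltn_ord.
by rewrite addr0.
Qed.


Ltac solve_ifs :=
  repeat match goal with
  | |- context [if ?b then _ else _] =>
      first [ rewrite (_ : b = true); last by lia
            | rewrite (_ : b = false); last by lia ]
  end.

Lemma det_arrow k (L R : nat -> F) :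
  (forall i, (i < k)%N -> L i.+1 - L i + (R i.+1 - R i) != 0) ->
  \det (\matrix_(i < k.+1, j < k.+1) (if (i <= j)%N then R j - L i else R i - L j)) =
  (\prod_(i < k) - (L i.+1 - L i + (R i.+1 - R i))) *
  (R k - L k + \sum_(i < k) (L i.+1 - L i) ^+ 2 / (L i.+1 - L i + (R i.+1 - R i))).
Proof.
move=> hd.
pose d := (fun i => L i.+1 - L i + (R i.+1 - R i)).
pose X : 'M[F]_k.+1 := \matrix_(i, j) (if (i < k)%N && (j < k)%N then
    (if (i == j :> nat) then - d i else 0)
    else if (i < k)%N then L i.+1 - L i else if (j < k)%N then L j.+1 - L j else R k - L k).
rewrite -[LHS]det_rowdiff -[LHS]det_tr -[LHS]det_rowdiff -[LHS]det_tr.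
transitivity (\det X).
  congr (\det _).
  apply/matrixP => i j; rewrite !mxE.
  have hi := ltn_ord i; have hj := ltn_ord j.
  case: (ltnP i k) => ik; case: (ltnP j k) => jk; rewrite ?inordK ?ltnS // /d.
  1-4: move: (nat_of_ord i) (nat_of_ord j) hi hj ik jk; clear i j => i j hi hj ik jk.
  1-4: case: (ltngtP i j) => h; [| have [->|ne] := eqVneq i j.+1 | subst]; solve_ifs; try ring.
  all: try (exfalso; lia).
  have ejk : j = k by lia.
  by rewrite ejk !subr0.
have hS : forall j : 'I_k.+1, \sum_(m < k.+1 | m != ord_max) (L m.+1 - L m) / d m * X m j =
   if (j < k)%N then -(L j.+1 - L j) else \sum_(i < k) (L i.+1 - L i) ^+ 2 / d i.
  move=> j; rewrite big_mkcond big_ord_recr /= eqxx addr0.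
  have -> : \sum_(i < k) (if widen_ord (leqnSn k) i != ord_max
      then (L (widen_ord (leqnSn k) i).+1 - L (widen_ord (leqnSn k) i)) / d (widen_ord (leqnSn k) i) *
           X (widen_ord (leqnSn k) i) j else 0) =
      \sum_(i < k) (L i.+1 - L i) / d i * X (widen_ord (leqnSn k) i) j.
    apply: eq_bigr => i _.
    have -> : (widen_ord (leqnSn k) i != ord_max) = true.
      by apply/negP => /eqP/(congr1 val) /= hi; move: (ltn_ord i); rewrite hi ltnn.
    done.
  case: ifP => jk.
    rewrite (bigD1 (Ordinal jk)) //= big1 ?addr0.
      rewrite mxE /= jk eqxx /=; field; exact: hd.
    move=> m hm; rewrite mxE /= (ltn_ord m) jk /=.
    have -> : (m == j :> nat) = false.
      by apply/negbTE; apply: contra hm => /eqP hm; apply/eqP/val_inj.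
    by rewrite mulr0.
  apply: eq_bigr => i _; rewrite mxE /= (ltn_ord i) jk /= expr2; field; exact: hd.
rewrite -(det_lastrow X (fun m : 'I_k.+1 => (L m.+1 - L m) / d m)) -det_tr det_trig.
  rewrite big_ord_recr /= !mxE eqxx hS ltnn /= addrC.
  congr (_ * _).
    apply: eq_bigr => i _; rewrite !mxE /= (ltn_ord i) eqxx /=.
    have -> : (widen_ord (leqnSn k) i == ord_max) = false.
      by apply/negP => /eqP/(congr1 val) /= hi; move: (ltn_ord i); rewrite hi ltnn.
    by rewrite addr0.
  by rewrite eqxx addrC.
apply/is_trig_mxP => i j ij; rewrite !mxE hS.
have [hj|hj] := eqVneq j ord_max.
  have ik : (i < k)%N by move: ij; rewrite hj /=.
  by rewrite hj /= ltnn /= ik addrN.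
have jk : (j < k)%N.
  by have := ltn_ord j; rewrite ltnS leq_eqVlt => /orP [/eqP h|//]; case/eqP: hj; apply/val_inj.
have ik0 : (i < k)%N by lia.
rewrite jk ik0 /= addr0.
have -> : (j == i :> nat) = false by lia.
done.
Qed.


End Gen.

Definition lq (q : nat) : nat := q./2.
Definition rq (q : nat) : nat := (q./2 + 1 + odd q)%N.

Lemma D_entry n (x y : 'I_(2 * n - 3)%N) :
  D_Pn n x y = if (x <= y)%N then (rq y)%:Z - (lq x)%:Z else (rq x)%:Z - (lq y)%:Z.
Proof.
rewrite mxE.
have key : forall x y : 'I_(2 * n - 3)%N, (x <= y)%N ->
    steiner_dist (@path_rel n) (B_elt x :|: B_elt y) = (rq y - lq x)%N.
  move=> {}x {}y xy.
  have hx : (lq x < n)%N by have := ltn_ord x; rewrite /lq; lia.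
  have hy : (rq y < n)%N by have := ltn_ord y; rewrite /rq; lia.
  apply: (@steiner_path n _ (Ordinal hx) (Ordinal hy)).
  - by rewrite !inE /= eqxx.
  - by rewrite !inE /= eqxx !orbT.
  move=> z; rewrite !inE /= /lq /rq => /orP [] /orP [] /eqP ->; lia.
case: leqP => xy.
  rewrite key // subzn //; rewrite /rq /lq; lia.
rewrite setUC key; last exact: ltnW.
rewrite subzn //; rewrite /rq /lq; lia.
Qed.

Lemma degree_path n (hn : (3 <= n)%N) (x : 'I_n) :
  (degree (@path_rel n) x == 1%N) = ((x == 0 :> nat) || (x == n.-1 :> nat)).
Proof.
rewrite /degree.
have [hx|hx] := boolP ((x == 0 :> nat) || (x == n.-1 :> nat)).
  have hw : ((if x == 0 :> nat then 1 else n.-2) < n)%N by case: ifP; lia.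
  apply/eqP; apply: (eq_card1 (x := Ordinal hw)) => y.
  rewrite !inE /path_rel -val_eqE /=.
  have := ltn_ord y; have := ltn_ord x.
  move=> ? ?; case: ifP => h0; apply/idP/idP; lia.
have h1 : (x.-1 < n)%N by have := ltn_ord x; lia.
have h2 : (x.+1 < n)%N by have := ltn_ord x; lia.
have sub : [set Ordinal h1; Ordinal h2] \subset [set y | path_rel x y].
  apply/subsetP => y; rewrite !inE -!val_eqE /path_rel /=; lia.
have := subset_leq_card sub; rewrite cards2 -val_eqE /=.
have -> : (x.-1 == x.+1) = false by lia.
by move=> h; apply/negbTE; rewrite neq_ltn h orbT.
Qed.

Lemma pendant_iff n (hn : (3 <= n)%N) (a : 'I_(2 * n - 3)%N) :
  pendant_edge (@path_rel n) (B_elt a) = ((a == 0 :> nat) || (a == (2 * n - 4)%N :> nat)).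
Proof.
have ha := ltn_ord a.
apply/idP/idP.
  case/existsP => x /existsP [y /and3P [/eqP hB hxy hdeg]].
  have xin : x \in B_elt a by rewrite hB !inE eqxx.
  have yin : y \in B_elt a by rewrite hB !inE eqxx orbT.
  move: xin yin; rewrite !inE => xin yin.
  have hx := ltn_ord x; have hy := ltn_ord y.
  move: hdeg; rewrite !degree_path // => hdeg.
  move: hxy; rewrite /path_rel => hxy.
  lia.
move=> h.
have h0 : ((if a == 0 :> nat then 0 else n.-2) < n)%N by case: ifP; lia.
have h1 : ((if a == 0 :> nat then 1 else n.-1) < n)%N by case: ifP; lia.
apply/existsP; exists (Ordinal h0); apply/existsP; exists (Ordinal h1).
apply/and3P; split.
- apply/eqP/setP => z; rewrite !inE -!val_eqE /=.
  have := ltn_ord z; move=> ?; case: ifP => ha0; apply/idP/idP; lia.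
- rewrite /path_rel /=; case: ifP => ha0; lia.
- rewrite !degree_path //=; case: ifP => ha0; lia.
Qed.

Lemma minor_det n' (M : 'M[int]_(n'.*2.+3)) (a : 'I_(n'.*2.+3)) :
  (forall x y : 'I_(n'.*2.+3), M x y =
     if (x <= y)%N then (rq y)%:Z - (lq x)%:Z else (rq x)%:Z - (lq y)%:Z) ->
  \det (row' a (col' a M)) =
  if (a == 0 :> nat) || (a == n'.*2.+2 :> nat) then - (n'%:Z + 2) else - (2 * n'%:Z + 3).
Proof.
move=> hM; apply: (@intr_inj rat); rewrite -det_map_mx.
set k := n'.*2.+1.
pose L i : rat := (lq (bump a i))%:R.
pose R i : rat := (rq (bump a i))%:R.
have -> : map_mx intr (row' a (col' a M)) =
    \matrix_(i < k.+1, j < k.+1) (if (i <= j)%N then R j - L i else R i - L j).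
  apply/matrixP => i j; rewrite !mxE hM /= leq_bump2.
  by case: ifP => _; rewrite rmorphB /=.
have ha := ltn_ord a.
have hdi : forall i, (i < k)%N -> L i.+1 - L i + (R i.+1 - R i) = if i.+1 == a :> nat then 2 else 1.
  move=> i ik.
  have e : (lq (bump a i.+1) + rq (bump a i.+1) =
            lq (bump a i) + rq (bump a i) + (if i.+1 == a :> nat then 2 else 1))%N.
    rewrite /lq /rq /bump; case: (leqP a i) => h1; case: (leqP a i.+1) => h2; case: ifP => h3 /=; lia.
  transitivity ((lq (bump a i.+1) + rq (bump a i.+1))%:R - (lq (bump a i) + rq (bump a i))%:R : rat).
    by rewrite (natrD _ (lq (bump a i.+1))) (natrD _ (lq (bump a i))) /L /R /=; ring.
  by rewrite e natrD addrAC subrr add0r; case: ifP.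
rewrite det_arrow; last by move=> i ik; rewrite hdi //; case: ifP => _; rewrite ?oner_eq0 ?pnatr_eq0.
have hsq : forall i : 'I_k, (L i.+1 - L i) ^+ 2 / (L i.+1 - L i + (R i.+1 - R i)) =
    (L i.+1 - L i) - (if i.+1 == a :> nat then 1 / 2 else 0).
  move=> i; rewrite hdi //; rewrite /L /=.
  case: ifP => hia.
    have e : (lq (bump a i.+1) = lq (bump a i) + 1)%N.
      by rewrite /lq /bump; case: (leqP a i) => h1; case: (leqP a i.+1) => h2 /=; lia.
    by rewrite e natrD addrAC subrr add0r; field.
  have [e|e] : (lq (bump a i.+1) = lq (bump a i))%N \/ (lq (bump a i.+1) = lq (bump a i) + 1)%N.
    by rewrite /lq /bump; case: (leqP a i) => h1; case: (leqP a i.+1) => h2 /=; lia.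
    by rewrite e subrr; field.
  by rewrite e natrD addrAC subrr add0r; field.
rewrite (eq_bigr (fun i : 'I_k => - (if i.+1 == a :> nat then 2 else 1))); last by move=> i _; rewrite hdi.
rewrite (eq_bigr _ (fun i _ => hsq i)) sumrB.
have tel : \sum_(i < k) (L i.+1 - L i) = L k - L 0.
  by rewrite -(big_mkord xpredT (fun i => L i.+1 - L i)) telescope_sumr.
rewrite tel prodrN card_ord.
set g := (0 < a <= k)%N.
have hsum : \sum_(i < k) (if i.+1 == a :> nat then 1 / 2 else 0) = if g then 1 / 2 else 0 :> rat.
  rewrite /g; case: ifP => hg.
    have ak : (a.-1 < k)%N by lia.
    rewrite (bigD1 (Ordinal ak)) //= big1 ?addr0.
      by have -> : (a.-1.+1 == a) by lia.
    move=> i hi; have -> : (i.+1 == a :> nat) = false; last by [].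
    apply/negbTE; apply: contra hi => /eqP hia; apply/eqP/val_inj => /=; lia.
  by rewrite big1 // => i _; rewrite (_ : (i.+1 == a :> nat) = false) //; have := ltn_ord i; lia.
have hprod : \prod_(i < k) (if i.+1 == a :> nat then 2 else 1) = if g then 2 else 1 :> rat.
  rewrite /g; case: ifP => hg.
    have ak : (a.-1 < k)%N by lia.
    rewrite (bigD1 (Ordinal ak)) //= big1 ?mulr1.
      by have -> : (a.-1.+1 == a) by lia.
    move=> i hi; have -> : (i.+1 == a :> nat) = false; last by [].
    apply/negbTE; apply: contra hi => /eqP hia; apply/eqP/val_inj => /=; lia.
  by rewrite big1 // => i _; rewrite (_ : (i.+1 == a :> nat) = false) //; have := ltn_ord i; lia.
rewrite hsum hprod.
have eRk : R k = (n'.+2)%:R.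
  have e : rq (bump a k) = n'.+2 by rewrite /rq /bump; case: (leqP a k) => h /=; lia.
  by rewrite /R e.
have eL0 : L 0 = 0.
  have e : lq (bump a 0) = 0%N by rewrite /lq /bump; case: (leqP a 0) => h /=; lia.
  by rewrite /L e.
have -> : (a == 0 :> nat) || (a == k.+1 :> nat) = ~~ g by rewrite /g; lia.
have -> : (-1) ^+ k = -1 :> rat by rewrite exprS -mul2n exprM expr2 mulrNN mulr1 expr1n mulr1.
rewrite eRk eL0; clear hsum hprod; case: g => /=.
  have e2 : (n'.+2%:R : rat) = n'%:R + 2 by rewrite -addn2 natrD.
  rewrite rmorphN rmorphD rmorphM /= -!pmulrn e2; field; done.
have e2 : (n'.+2%:R : rat) = n'%:R + 2 by rewrite -addn2 natrD.
rewrite rmorphN rmorphD /= -!pmulrn e2; ring.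
Qed.

Theorem theorem5p13 (n : nat) (hn : (3 <= n)%N) (a : 'I_(2 * n - 3)%N) :
  \det (row' a (col' a (D_Pn n))) =
  (if pendant_edge (@path_rel n) (B_elt a) then - (n%:Z - 1)
   else - (2 * n%:Z - 3)).
Proof.
rewrite pendant_iff //.
have key : forall m (em : m = (n - 3)%N.*2.+3) (Mx : 'M[int]_m) (b : 'I_m),
    (forall x y : 'I_m, Mx x y =
       if (x <= y)%N then (rq y)%:Z - (lq x)%:Z else (rq x)%:Z - (lq y)%:Z) ->
    \det (row' b (col' b Mx)) =
    if (b == 0 :> nat) || (b == (n - 3)%N.*2.+2 :> nat) then - ((n - 3)%N%:Z + 2)
    else - (2 * (n - 3)%N%:Z + 3).
  by move=> m em; subst m; exact: minor_det.
have e : (2 * n - 3)%N = (n - 3)%N.*2.+3 by lia.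
rewrite (key _ e (D_Pn n) a (@D_entry n)).
have -> : (2 * n - 4)%N = (n - 3)%N.*2.+2 by lia.
case: ifP => _; lia.
Qed.
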